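(* Let $\mathbb{A}$ be a non-empty set and $x\in\mathbb{A}^\omega$ a word that is not purely periodic (i.e. not of the form $u^\omega$ with $u\in\mathbb{A}^+$). Define $\varphi:\mathbb{A}^+\to\{0,1\}$ by $\varphi(u)=0$ if $u$ is a prefix of $x$ and $\varphi(u)=1$ otherwise. Then $x$ admits no $\varphi$-sequentially monochromatic factorization.
   Context: A factorization $x=V_0V_1V_2\cdots$ with all $V_i\in\mathbb{A}^+$ is $\varphi$-sequentially monochromatic if there is a color $c$ with $\varphi(V_iV_{i+1}\cdots V_{i+j})=c$ for all $i,j\ge0$. *)

(* Defs.v *)
From mathcomp Require Import all_boot.
From Stdlib Require Import ClassicalEpsilon.
Set Implicit Arguments. Unset Strict Implicit. Unset Printing Implicit Defensive.

(* Infinite words over an alphabet A are functions nat -> A;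
   finite words are seq A, with A^+ = nonempty seqs.
   The default element used for nth is x 0 (irrelevant since indices are in range). *)

Definition is_prefix (A : Type) (x : nat -> A) (u : seq A) : Prop :=
  forall i, i < size u -> nth (x 0) u i = x i.

Definition purely_periodic (A : Type) (x : nat -> A) : Prop :=
  exists u : seq A, 0 < size u /\ forall n, x n = nth (x 0) u (n %% size u).

Definition phi (A : Type) (x : nat -> A) (u : seq A) : nat :=
  if excluded_middle_informative (is_prefix x u) then 0 else 1.

Definition start (A : Type) (V : nat -> seq A) (n : nat) : nat :=
  \sum_(k < n) size (V k).

Definition is_factorization (A : Type) (x : nat -> A) (V : nat -> seq A) : Prop :=
  (forall n, 0 < size (V n)) /\
  (forall n i, i < size (V n) -> nth (x 0) (V n) i = x (start V n + i)).

(* V_i V_{i+1} ... V_{i+j} *)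
Definition block (A : Type) (V : nat -> seq A) (i j : nat) : seq A :=
  flatten [seq V k | k <- iota i j.+1].

Definition seq_monochromatic (A : Type) (col : seq A -> nat) (V : nat -> seq A) : Prop :=
  exists c : nat, forall i j, col (block V i j) = c.

(* Main.v *)
Require Import Defs.
From mathcomp Require Import all_boot.
From Stdlib Require Import ClassicalEpsilon Lia.
From mathcomp Require Import zify.

Lemma startS (A : Type) (V : nat -> seq A) i : start V i.+1 = start V i + size (V i).
Proof. by rewrite /start big_ord_recr. Qed.

Lemma blockS (A : Type) (V : nat -> seq A) i j : block V i j.+1 = V i ++ block V i.+1 j.
Proof. by []. Qed.

Lemma block_size (A : Type) (V : nat -> seq A) : (forall n, 0 < size (V n)) ->
  forall j i, j < size (block V i j).
Proof.
move=> H; elim=> [|j IH] i.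
  by rewrite /block /= cats0.
rewrite blockS size_cat; have := IH i.+1; have := H i; lia.
Qed.

Lemma block_nth {A : Type} (x : nat -> A) (V : nat -> seq A) : is_factorization x V ->
  forall j i m, m < size (block V i j) -> nth (x 0) (block V i j) m = x (start V i + m).
Proof.
move=> [Hp Hf]; elim=> [|j IH] i m.
  rewrite /block /= cats0; exact: Hf.
rewrite blockS size_cat nth_cat => Hm.
case: ifP => Hl; first exact: Hf.
rewrite IH; last by move/negbT: Hl; rewrite -leqNgt => Hl; lia.
rewrite startS; congr x; move/negbT: Hl; rewrite -leqNgt => Hl; lia.
Qed.

Theorem mainTheorem12 (A : Type) (x : nat -> A) :
  ~ purely_periodic x ->
  ~ exists V : nat -> seq A, is_factorization x V /\ seq_monochromatic (phi x) V.
Proof.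
move=> Hnp [V [Hfac [c Hc]]].
have Hpre : forall i j, is_prefix x (block V i j).
  move=> i j; have E1 := Hc i j; have E0 := Hc 0 0.
  move: E1 E0; rewrite /phi.
  destruct (excluded_middle_informative (is_prefix x (block V 0 0))) as [H0|Hn].
    by destruct (excluded_middle_informative (is_prefix x (block V i j))) => // E1 E0; rewrite -E0 in E1.
  exfalso; apply: Hn => m Hm; rewrite (block_nth _ _ Hfac _ _ _ Hm).
  by rewrite /start big_ord0.
set p := size (V 0).
have pP : 0 < p by case: Hfac => H _; exact: H.
have Hper : forall m, x (p + m) = x m.
  move=> m.
  have Hm : m < size (block V 1 m) by apply: block_size; case: Hfac => H _; exact: H.
  have := Hpre 1 m m Hm; rewrite (block_nth _ _ Hfac _ _ _ Hm) => <-.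
  by rewrite startS /start big_ord0.
have Hk : forall k r, x (k * p + r) = x r.
  elim=> [|k IH] r; first by [].
  by rewrite mulSn -addnA Hper IH.
apply: Hnp; exists (mkseq x p); rewrite size_mkseq; split => // n.
rewrite nth_mkseq ?ltn_pmod //.
by rewrite {1}(divn_eq n p) Hk.
Qed.
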